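(* Let $q$ be a prime power and $GF(q)$ the finite field with $q$ elements. For every integer $n\ge 1$, the number of $n\times n$ upper-triangular matrices $X$ with entries in $GF(q)$ satisfying $X^2=0$ equals $C_n(q)$, where for $n\ge 0$ $$C_{2n}(q)=\sum_{j\in\mathbb{Z}}\left[\binom{2n}{n-3j}-\binom{2n}{n-3j-1}\right] q^{\,n^2-3j^2-j},$$ $$C_{2n+1}(q)=\sum_{j\in\mathbb{Z}}\left[\binom{2n+1}{n-3j}-\binom{2n+1}{n-3j-1}\right] q^{\,n^2+n-3j^2-2j}.$$
   Context: Ordinary binomial coefficients $\binom{N}{k}$ are taken to be $0$ when $k<0$ or $k>N$, so each sum over $j\in\mathbb{Z}$ has finitely many nonzero terms. *)

(* Defs.v *)
From HB Require Import structures.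
From mathcomp Require Import all_boot all_order all_algebra all_fingroup all_field.
Set Implicit Arguments. Unset Strict Implicit. Unset Printing Implicit Defensive.
Import Order.TTheory GRing.Theory Num.Theory.
Local Open Scope ring_scope.

Definition binz (N : nat) (k : int) : int :=
  match k with Posz k' => ('C(N, k'))%:Z | Negz _ => 0 end.

Definition upper_triangular (R : nmodType) (n : nat) (X : 'M[R]_n) : bool :=
  [forall i : 'I_n, forall j : 'I_n, (j < i)%N ==> (X i j == 0)].

(* the finite sum over j in Z, restricted to j in [-m, m], which contains
   every j giving a nonzero binomial term (m = 2n or 2n+1) *)
Definition Cpoly (m : nat) (q : nat) : rat :=
  let n := m./2 in
  \sum_(i < (2 * m).+1)
    (let j : int := (i%:Z - m%:Z) in
     if ~~ odd m then
       ((binz m (n%:Z - 3 * j) - binz m (n%:Z - 3 * j - 1))%:~R : rat)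
         * (q%:R : rat) ^ ((n * n)%:Z - 3 * j * j - j)
     else
       ((binz m (n%:Z - 3 * j) - binz m (n%:Z - 3 * j - 1))%:~R : rat)
         * (q%:R : rat) ^ ((n * n + n)%:Z - 3 * j * j - 2 * j)).

(* Main.v *)
Require Import Defs.
From HB Require Import structures.
From mathcomp Require Import all_boot all_order all_algebra all_fingroup all_field.
From mathcomp Require Import zify ring lra.
Set Implicit Arguments. Unset Strict Implicit. Unset Printing Implicit Defensive.
Import Order.TTheory GRing.Theory Num.Theory.
Local Open Scope ring_scope.

Section LA.
Variable F : finFieldType.

Lemma card_sub m n (A : 'M[F]_(m,n)) :
  #|[set w : 'rV[F]_n | (w <= A)%MS]| = (#|F| ^ \rank A)%N.
Proof.
have inj := row_free_inj (row_base_free A).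
have -> : [set w : 'rV[F]_n | (w <= A)%MS] =
          [set u *m row_base A | u : 'rV[F]_(\rank A)].
  apply/setP=> w; rewrite inE; apply/idP/imsetP.
    move=> sw; have: (w <= row_base A)%MS by rewrite eq_row_base.
    by case/submxP=> D ->; exists D.
  case=> u _ ->; apply: submx_trans (submxMl _ _) _; by rewrite eq_row_base.
rewrite card_imset; last exact: inj.
by rewrite card_mx mul1n.
Qed.

Lemma card_ker n (Y : 'M[F]_n) :
  #|[set w : 'rV[F]_n | w *m Y == 0]| = (#|F| ^ (n - \rank Y))%N.
Proof.
rewrite -mxrank_ker -card_sub; apply: eq_card => w; by rewrite !inE sub_kermx.
Qed.

Lemma rank_colv n m (w : 'rV[F]_n) (Y : 'M[F]_(m,n)) :
  \rank (col_mx w Y) = (\rank Y + ~~ (w <= Y)%MS)%N.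
Proof.
rewrite -addsmxE; case: (boolP (w <= Y)%MS) => h.
  by rewrite (addsmx_idPr h) addn0.
have w0 : w != 0 by apply: contraNneq h => ->; rewrite sub0mx.
have := mxrank_sum_cap w Y; rewrite rank_rV w0.
have [le eqi] := mxrank_leqif_sup (capmxSl w Y).
have : \rank (w :&: Y)%MS != \rank w.
  rewrite eqi; apply: contra h => h2.
  by apply: submx_trans h2 _; exact: capmxSr.
move: le; rewrite rank_rV w0 /= => le ne.
have c0 : \rank (w :&: Y)%MS = 0%N by lia.
rewrite c0; lia.
Qed.

Lemma ut_block n (a : 'M[F]_1) (w : 'rV[F]_n) (c : 'cV[F]_n) (Y : 'M[F]_n) :
  upper_triangular (block_mx a w c Y : 'M_(1 + n)) = (c == 0) && upper_triangular Y.
Proof.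
rewrite /upper_triangular; apply/forallP/andP.
  move=> H; split.
    apply/eqP/matrixP => i j; rewrite mxE.
    move: (H (rshift 1 i)) => /forallP/(_ (lshift n j))/implyP.
    rewrite block_mxEdl => H'; apply/eqP; apply: H'; rewrite (ord1 j) /=; lia.
  apply/forallP=> i; apply/forallP=> j; apply/implyP=> lt.
  move: (H (rshift 1 i)) => /forallP/(_ (rshift 1 j))/implyP.
  by rewrite block_mxEdr; apply; rewrite /= ltn_add2l.
move=> [/eqP c0 /forallP HY] i; apply/forallP=> j; apply/implyP => lt.
move: lt; rewrite -[i](splitK i) -[j](splitK j).
case: (split i) => i'; case: (split j) => j' /=.
- by rewrite (ord1 i') (ord1 j').
- rewrite (ord1 i') /=; lia.
- by rewrite block_mxEdl c0 mxE.
- by rewrite block_mxEdr ltn_add2l => lt; move: (HY i') => /forallP/(_ j')/implyP; apply.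
Qed.


Lemma sq11 (a : 'M[F]_1) : (a *m a == 0) = (a == 0).
Proof.
apply/idP/idP => [|/eqP->]; last by rewrite mul0mx.
rewrite [a]mx11_scalar -scalar_mxM => /eqP/matrixP/(_ 0 0).
rewrite !mxE /= mulr1n => /eqP; rewrite mulf_eq0 orbb => /eqP a0.
by apply/eqP/matrixP=> i j; rewrite !mxE (ord1 i) (ord1 j) a0 /= mul0rn.
Qed.

Definition G n := [set X : 'M[F]_n | upper_triangular X && (X *m X == 0)].
Definition Srk n r := [set X in G n | \rank X == r].
Definition W n (Y : 'M[F]_n) r :=
  [set w : 'rV[F]_n | (w *m Y == 0) && (\rank (col_mx w Y) == r)].

Lemma blk_rank n (w : 'rV[F]_n) (Y : 'M[F]_n) :
  \rank (block_mx 0 w 0 Y : 'M_(1 + n)) = \rank (col_mx w Y).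
Proof. by rewrite block_mxEh col_mx0 rank_row_0mx. Qed.

Lemma blk_sq n (a : 'M[F]_1) (w : 'rV[F]_n) (Y : 'M[F]_n) :
  (block_mx a w 0 Y *m block_mx a w 0 Y == 0 :> 'M_(1 + n)) =
  [&& a == 0, w *m Y == 0 & Y *m Y == 0].
Proof.
rewrite mulmx_block !mulmx0 !mul0mx !addr0 !add0r -block_mx0.
apply/eqP/and3P.
  case/eq_block_mx => /eqP; rewrite sq11 => /eqP a0; rewrite a0 mul0mx add0r.
  by move=> -> _ ->.
by case=> /eqP -> /eqP -> /eqP ->; rewrite !mul0mx add0r.
Qed.

Lemma card_Srk_S n r :
  #|Srk (1 + n) r| = (\sum_(Y in G n) #|W Y r|)%N.
Proof.
pose phi (p : 'M[F]_n * 'rV[F]_n) : 'M[F]_(1 + n) := block_mx 0 p.2 0 p.1.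
pose P := [set p : 'M[F]_n * 'rV[F]_n | (p.1 \in G n) && (p.2 \in W p.1 r)].
have -> : Srk (1 + n) r = phi @: P.
  apply/setP => X; rewrite !inE; apply/idP/imsetP.
    case/andP=> /andP[ut sq] rk.
    rewrite -(submxK X) in ut sq rk.
    move: ut; rewrite ut_block => /andP[/eqP c0 utY].
    rewrite c0 blk_sq in sq; case/and3P: sq => /eqP a0 wY YY.
    exists (drsubmx X, ursubmx X).
      by rewrite !inE /= utY YY wY -(blk_rank (ursubmx X)) -a0 -c0.
    by rewrite /phi /= -{1}(submxK X) a0 c0.
  case=> p; rewrite !inE => /andP[/andP[ut sq] /andP[wY rk]] ->.
  rewrite /phi ut_block eqxx ut blk_sq eqxx sq wY /=.
  by rewrite blk_rank.
rewrite card_imset; last first.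
  by move=> [Y1 w1] [Y2 w2]; rewrite /phi /= => /eq_block_mx [_ -> _ ->].
rewrite -sum1_card.
rewrite (eq_bigl (fun p => (p.1 \in G n) && (p.2 \in W p.1 r))); last first.
  by move=> p; rewrite inE.
rewrite -(pair_big_dep (fun Y => Y \in G n) (fun Y w => w \in W Y r) (fun _ _ => 1%N)) /=.
by apply: eq_bigr => Y _; rewrite sum1_card.
Qed.


Lemma card_W n (Y : 'M[F]_n) r : Y *m Y = 0 ->
  (#|W Y r|%:R : rat) =
  (if r == \rank Y then (#|F|%:R : rat) ^+ \rank Y else 0) +
  (if r == (\rank Y).+1 then (#|F|%:R : rat) ^+ (n - \rank Y) - (#|F|%:R) ^+ \rank Y
   else 0).
Proof.
move=> YY.
have YK : (Y <= kermx Y)%MS by rewrite sub_kermx YY.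
have sub_ker w : (w <= Y)%MS -> w *m Y == 0.
  by move=> h; rewrite -sub_kermx (submx_trans h YK).
have eW : W Y r = [set w : 'rV[F]_n | (w *m Y == 0) &&
                    ((\rank Y + ~~ (w <= Y)%MS)%N == r)].
  by apply/setP => w; rewrite !inE rank_colv.
rewrite eW.
case: (eqVneq r (\rank Y)) => [->|ne1].
  have -> : [set w : 'rV[F]_n | (w *m Y == 0) &&
                    ((\rank Y + ~~ (w <= Y)%MS)%N == \rank Y)]
            = [set w : 'rV[F]_n | (w <= Y)%MS].
    apply/setP => w; rewrite !inE; case: (boolP (w <= Y)%MS) => h /=.
      by rewrite sub_ker // addn0 eqxx.
    by rewrite addn1 (gtn_eqF (ltnSn _)) andbF.
  rewrite card_sub natrX ifN ?addr0 //; lia.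
rewrite add0r; case: (eqVneq r (\rank Y).+1) => [->|ne2].
  have -> : [set w : 'rV[F]_n | (w *m Y == 0) &&
                    ((\rank Y + ~~ (w <= Y)%MS)%N == (\rank Y).+1)]
            = [set w : 'rV[F]_n | w *m Y == 0] :\: [set w : 'rV[F]_n | (w <= Y)%MS].
    apply/setP => w; rewrite !inE; case: (boolP (w <= Y)%MS) => h /=.
      by rewrite addn0 (ltn_eqF (ltnSn _)) andbF.
    by rewrite addn1 eqxx andbT.
  have sb : [set w : 'rV[F]_n | (w <= Y)%MS] \subset [set w : 'rV[F]_n | w *m Y == 0].
    by apply/subsetP => w; rewrite !inE; exact: sub_ker.
  rewrite cardsD (setIidPr sb) natrB; last exact: subset_leq_card.
  by rewrite card_ker card_sub !natrX.
rewrite (_ : [set _ | _] = set0) ?cards0 //.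
apply/setP => w; rewrite !inE; case: (w <= Y)%MS => /=; rewrite ?addn0 ?addn1.
  by rewrite [_ == r]eq_sym (negbTE ne1) andbF.
by rewrite [_ == r]eq_sym (negbTE ne2) andbF.
Qed.

Definition cnt n r := #|Srk n r|.

Lemma sum_if_rank n (a : rat) r :
  (\sum_(Y in G n) (if r == \rank Y then a else 0)) = a * (cnt n r)%:R.
Proof.
rewrite (bigID (fun Y => r == \rank Y)) /= [X in _ + X]big1 ?addr0; last first.
  by move=> Y /andP[_ /negbTE ->].
rewrite (eq_bigr (fun _ => a)); last by move=> Y /andP[_ ->].
rewrite sumr_const mulr_natr /cnt; congr (_ *+ _).
apply: eq_card => Y; rewrite /Srk !inE unfold_in /= inE; congr (_ && _); exact: eq_sym.
Qed.

Lemma cnt_S n r :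
  ((cnt (1 + n) r)%:R : rat) =
  (#|F|%:R : rat) ^+ r * (cnt n r)%:R +
  (if r is r'.+1 then ((#|F|%:R : rat) ^+ (n - r') - (#|F|%:R) ^+ r') * (cnt n r')%:R
   else 0).
Proof.
rewrite {1}/cnt card_Srk_S natr_sum.
rewrite (eq_bigr (fun Y => (if r == \rank Y then (#|F|%:R : rat) ^+ r else 0) +
  (if r == (\rank Y).+1 then (#|F|%:R : rat) ^+ (n - r.-1) - (#|F|%:R) ^+ r.-1
   else 0))); last first.
  move=> Y; rewrite inE => /andP[_ /eqP YY]; rewrite card_W //.
  have [->|ne1] := eqVneq r (\rank Y); first by rewrite (ltn_eqF (ltnSn _)).
  by case: eqP => // ->.
rewrite (@big_split rat 0 +%R) /= sum_if_rank; congr (_ + _).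
case: r => [|r'] /=.
  by rewrite big1 // => Y _.
rewrite -sum_if_rank; apply: eq_bigr => Y _.
by rewrite eqSS.
Qed.


Lemma cnt0 r : ((cnt 0 r)%:R : rat) = (r == 0%N)%:R.
Proof.
rewrite /cnt; case: r => [|r].
  rewrite (_ : Srk 0 0 = setT) ?cardsT ?card_mx //.
  apply/setP => X; rewrite !inE; apply/andP; split; last first.
    by rewrite -leqn0 rank_leq_row.
  by rewrite flatmx0 mulmx0 eqxx andbT; apply/forallP => -[].
rewrite (_ : Srk 0 r.+1 = set0) ?cards0 //.
apply/setP => X; rewrite !inE; apply/negbTE; rewrite negb_and; apply/orP; right.
by apply/negP => /eqP h; have := rank_leq_row X; rewrite h.
Qed.

Lemma card_G_sum N : (#|G N|%:R : rat) = \sum_(r < N.+1) (cnt N r)%:R.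
Proof.
rewrite (eq_bigr (fun r : 'I_N.+1 =>
   \sum_(Y in G N) (if (r : nat) == \rank Y then (1 : rat) else 0))); last first.
  by move=> r _; rewrite sum_if_rank mul1r.
rewrite exchange_big /= -sum1_card natr_sum; apply: eq_bigr => X _.
have lt : (\rank X < N.+1)%N by rewrite ltnS rank_leq_row.
rewrite (bigD1 (Ordinal lt)) //= eqxx big1 ?addr0 // => r.
by rewrite -val_eqE /= => /negbTE ->.
Qed.

End LA.

Section Alg.
Variable q : rat.

Fixpoint qb (n k : nat) : rat :=
  match n, k with
  | _, 0 => 1
  | 0, _.+1 => 0
  | n'.+1, k'.+1 => qb n' k' + q ^+ k'.+1 * qb n' k'.+1
  end.

Lemma qb0 n : qb n 0 = 1. Proof. by case: n. Qed.
Lemma qbSS n k : qb n.+1 k.+1 = qb n k + q ^+ k.+1 * qb n k.+1. Proof. by []. Qed.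

Lemma qb_gt n k : (n < k)%N -> qb n k = 0.
Proof.
elim: n k => [|n IH] [|k] //= lt.
by rewrite !IH ?mulr0 ?addr0 //; lia.
Qed.

Lemma qbR n j : (q ^+ j.+1 - 1) * qb n j.+1 = (q ^+ (n - j) - 1) * qb n j.
Proof.
elim: n j => [|n IH] j.
  by case: j => [|j] /=; rewrite ?subn0 ?expr0 ?subrr ?mulr0 ?mul0r.
case: j => [|j].
  rewrite qbSS !qb0 subn0 mulr1.
  have := IH 0%N; rewrite qb0 subn0 mulr1 => H.
  rewrite mulrDr mulr1 mulrCA H !exprS; ring.
rewrite !qbSS.
have H1 := IH j; have H2 := IH j.+1.
case: (ltnP j n) => jn.
  have e1 : (n.+1 - j.+1 = n - j)%N by lia.
  have e2 : (n - j = (n - j.+1).+1)%N by lia.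
  rewrite e1.
  move: H1 H2; rewrite e2 => H1 H2.
  set a := qb n j in H1 *; set b := qb n j.+1 in H1 H2 *; set c := qb n j.+2 in H2 *.
  rewrite mulrDr mulrCA H2.
  rewrite mulrDr [X in _ = _ + X]mulrCA -H1.
  rewrite !exprS.
  ring.
have b0 : qb n j.+1 = 0 by apply: qb_gt; lia.
have c0 : qb n j.+2 = 0 by apply: qb_gt; lia.
have -> : (n.+1 - j.+1 = 0)%N by lia.
by rewrite b0 c0 !mulr0 !addr0 expr0 subrr !mul0r.
Qed.

Lemma qb3 n j :
  (q ^+ n.+1 - q ^+ j) * qb n.+1 j = q ^+ j * (q ^+ n.+1 - 1) * qb n j.
Proof.
case: j => [|j]; first by rewrite !qb0 expr0 !mul1r mulr1.
rewrite qbSS.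
have H := qbR n j.
case: (leqP j n) => jn.
  set a := qb n j in H *; set b := qb n j.+1 in H *.
  have -> : n = (j + (n - j))%N by lia.
  move: H; set d := (n - j)%N => H.
  have E : (q ^+ (j + d).+1 - q ^+ j.+1) * (a + q ^+ j.+1 * b) -
           q ^+ j.+1 * (q ^+ (j + d).+1 - 1) * b =
           q ^+ j.+1 * ((q ^+ d - 1) * a - (q ^+ j.+1 - 1) * b).
    rewrite !exprS !exprD; ring.
  by apply/eqP; rewrite -subr_eq0 E H subrr mulr0.
have a0 : qb n j = 0 by apply: qb_gt; lia.
have b0 : qb n j.+1 = 0 by apply: qb_gt; lia.
by rewrite a0 b0 !mulr0.
Qed.

Lemma qbP2 n k : qb n.+1 k.+1 = q ^+ (n - k) * qb n k + qb n k.+1.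
Proof.
elim: n k => [|n IH] k.
  by case: k => [|k] //=; rewrite !mulr0 ?addr0 ?mulr1 ?expr0.
case: k => [|k].
  rewrite {1}qbSS qb0 [in X in X = _](IH 0%N) [in X in _ = X](qbSS n 0) !qb0 !subn0.
  rewrite !exprS; ring.
rewrite qbSS [in X in X = _](IH k) [in X in X = _](IH k.+1).
rewrite [in X in _ = X](qbSS n k) [in X in _ = X](qbSS n k.+1).
case: (ltnP k n) => kn.
  have -> : (n.+1 - k.+1 = (n - k.+1).+1)%N by lia.
  have -> : (n - k = (n - k.+1).+1)%N by lia.
  rewrite !exprS; ring.
have a0 : qb n k.+1 = 0 by apply: qb_gt; lia.
have b0 : qb n k.+2 = 0 by apply: qb_gt; lia.
rewrite a0 b0 !mulr0 !addr0.
have -> : (n.+1 - k.+1 = n - k)%N by lia.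
done.
Qed.


Definition Dn (N k : nat) : rat :=
  if (2 * k <= N)%N then
    ('C(N, k)%:R - (if k is k'.+1 then 'C(N, k')%:R else 0)) else 0.

Definition T (N k i : nat) : rat :=
  (-1) ^+ i * q ^+ (k * (N - k) + 'C(i, 2)) * qb (N - k - (k + i)) i.

Lemma TW k j n (N := (2 * k + j + n).+1) :
  T N.+1 k j.+1 + T N.+1 k.+1 j =
  q ^+ (k + j).+1 * T N k j.+1 + (q ^+ (N - (k + j)) - q ^+ (k + j)) * T N k j.
Proof.
rewrite /T.
have -> : (N.+1 - k - (k + j.+1) = n.+1)%N by rewrite /N; lia.
have -> : (N.+1 - k.+1 - (k.+1 + j) = n)%N by rewrite /N; lia.
have -> : (N - k - (k + j.+1) = n)%N by rewrite /N; lia.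
have -> : (N - k - (k + j) = n.+1)%N by rewrite /N; lia.
have -> : (N - (k + j) = k + n.+1)%N by rewrite /N; lia.
have -> : (N.+1 - k = (N - k).+1)%N by rewrite /N; lia.
have -> : (N.+1 - k.+1 = N - k)%N by rewrite /N; lia.
have -> : (N - k = k + j + n.+1)%N by rewrite /N; lia.
set M := (k + j + n.+1)%N.
rewrite mulnS mulSn binS bin1.
have H1 := qb3 n j.
have H2 := qbSS n j.
set a := qb n j in H1 H2 *; set b := qb n.+1 j in H1 *; set c := qb n j.+1 in H2 *.
set d := qb n.+1 j.+1 in H2 *.
rewrite H2.
rewrite !exprD.
set X := q ^+ (k * M).
rewrite !exprS exprD.
set B := q ^+ 'C(j, 2).
set Q := q ^+ n in H1 *.
set J := q ^+ j in H1 *.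
set K := q ^+ k.
set S := (-1) ^+ j.
rewrite !exprS in H1.
apply/eqP; rewrite -subr_eq0; apply/eqP.
have E : forall s : rat, s * ((q * Q - J) * b - J * (q * Q - 1) * a) = 0.
  by move=> s; rewrite H1 subrr mulr0.
rewrite -(E (- (S * K * X * B))).
ring.
Qed.


Definition g (N r : nat) : rat := \sum_(0 <= k < r.+1) Dn N k * T N k (r - k).

Lemma Dn0 N : Dn N 0 = 1.
Proof. by rewrite /Dn muln0 leq0n bin0 subr0. Qed.

Lemma DnS N k : (2 * k.+1 <= N.+1)%N -> Dn N.+1 k.+1 = Dn N k.+1 + Dn N k.
Proof.
move=> h; rewrite /Dn h.
have hk : (2 * k <= N)%N by lia.
rewrite hk; case: (leqP (2 * k.+1) N) => h2.
  case: k h hk h2 => [|k] h hk h2.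
    by rewrite binS !bin0 natrD; ring.
  by rewrite (binS N k.+1) (binS N k) !natrD; ring.
have eN : N = (2 * k).+1 by lia.
rewrite add0r binS (natrD _ ('C(N, k.+1))).
have -> : 'C(N, k.+1) = 'C(N, k).
  by rewrite -(bin_sub (n := N) (m := k.+1)) ?eN; [congr 'C(_, _); lia | lia].
case: k h hk h2 eN => [|k] h hk h2 eN; first by rewrite bin0.
rewrite (binS N k) natrD; ring.
Qed.

Lemma T0 N k : (k <= N)%N -> T N k 0 = q ^+ (k * (N - k)).
Proof. by move=> _; rewrite /T expr0 mul1r (_ : 'C(0, 2) = 0%N) // addn0 qb0 mulr1. Qed.

Lemma sumD N m (X : nat -> rat) : (2 * m <= N.+1)%N ->
  \sum_(0 <= k < m.+1) Dn N.+1 k * X k =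
  \sum_(0 <= k < m.+1) Dn N k * X k + \sum_(0 <= k < m) Dn N k * X k.+1.
Proof.
move=> h; rewrite !big_nat_recl // !Dn0.
rewrite (@eq_big_nat _ _ _ 0 m _ (fun k => Dn N k.+1 * X k.+1 + Dn N k * X k.+1)); last first.
  by move=> k /andP[_ km]; rewrite DnS ?mulrDl //; lia.
by rewrite big_split /= addrA.
Qed.

Lemma rearr (a b c d l l' : rat) : a + b = c + d -> l = l' -> a + l + b = c + l' + d.
Proof. by move=> h ->; rewrite addrAC h addrAC. Qed.

Lemma g_rec N r : (2 * r.+1 <= N.+1)%N ->
  g N.+1 r.+1 = q ^+ r.+1 * g N r.+1 + (q ^+ (N - r) - q ^+ r) * g N r.
Proof.
move=> h; rewrite /g (sumD (fun k => T N.+1 k (r.+1 - k))) //.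
rewrite big_nat_recr //= [X in _ = q ^+ r.+1 * X + _]big_nat_recr //=.
rewrite subnn !T0; try lia.
rewrite mulrDr !mulr_sumr.
have -> : (N.+1 - r.+1 = N - r)%N by lia.
have -> : q ^+ (r.+1 * (N - r)) = q ^+ r.+1 * q ^+ (r.+1 * (N - r.+1)).
  have -> : (N - r = (N - r.+1).+1)%N by lia.
  by rewrite mulnS exprD.
apply: rearr; last by ring.
rewrite -big_split /=.
rewrite -big_split /=; apply: eq_big_nat => k /andP[_ kr].
rewrite subSS.
have eN : N = (2 * k + (r - k) + (N - k - r.+1)).+1 by lia.
have := TW k (r - k) (N - k - r.+1); rewrite /= -eN.
have -> : (r.+1 - k = (r - k).+1)%N by lia.
have -> : (k + (r - k) = r)%N by lia.
move=> E.
rewrite -!mulrDr E; ring.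
Qed.


Lemma g_gt N r : (N < 2 * r)%N -> g N r = 0.
Proof.
move=> h; rewrite /g big_nat_cond big1 // => k /andP[/andP[_ kr] _].
rewrite /Dn; case: ifP => hk; last by rewrite mul0r.
rewrite /T qb_gt ?mulr0 //; lia.
Qed.

Lemma g_N0 N : g N 0 = 1.
Proof. by rewrite /g big_nat1 Dn0 T0 // mul0n expr0 mulr1. Qed.

Definition a (m : nat) : rat :=
  \sum_(0 <= i < m.+1) (-1) ^+ i * q ^+ 'C(i, 2) * qb (m - i) i.
Definition cc (m : nat) : rat :=
  \sum_(0 <= i < m.+1) (-1) ^+ i * q ^+ ('C(i, 2) + (m - i)) * qb (m - i) i.

Lemma qb0S k : qb 0 k.+1 = 0. Proof. by []. Qed.

Lemma sum_ext (f : nat -> rat) n m : (n <= m)%N ->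
  (forall i, (n <= i < m)%N -> f i = 0) ->
  \sum_(0 <= i < n) f i = \sum_(0 <= i < m) f i.
Proof.
move=> nm h; rewrite [RHS](big_cat_nat _ (n := n)) //=.
rewrite (_ : \sum_(n <= i < m) f i = 0) ?addr0 //.
rewrite big_nat_cond big1 // => i /andP[hi _]; exact: h.
Qed.

Lemma R1 m : a m.+2 = a m.+1 - cc m.
Proof.
rewrite /a /cc big_nat_recl // [X in _ = X - _]big_nat_recl //.
rewrite [X in _ = _ + X - _](sum_ext _ (m := m.+2)) //; last first.
  move=> i /andP[h1 h2]; have -> : i = m.+1 by lia.
  by rewrite qb_gt ?mulr0 //; lia.
rewrite [X in _ = _ - X](sum_ext _ (m := m.+2)) //; last first.
  move=> i /andP[h1 h2]; have -> : i = m.+1 by lia.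
  by rewrite qb_gt ?mulr0 //; lia.
rewrite !subn0 !qb0 -addrA; congr (_ + _).
rewrite -sumrB; apply: eq_big_nat => i /andP[_ im].
rewrite subSS.
case: (leqP i m) => hi.
  have -> : (m.+1 - i = (m - i).+1)%N by lia.
  rewrite qbP2 mulrDr addrC; congr (_ + _).
  rewrite !exprS binS bin1.
  case: (leqP (2 * i) m) => h2.
    have e : q ^+ (m - i) = q ^+ i * q ^+ (m - i - i).
      by rewrite -exprD; congr (_ ^+ _); lia.
    rewrite !exprD e; ring.
  rewrite (qb_gt (n := m - i)); last by lia.
  by rewrite !mulr0 oppr0.
have -> : (m.+1 - i = 0)%N by lia.
have -> : (m - i = 0)%N by lia.
case: i im hi => // i im hi.
rewrite !qb0S (qb_gt (n := m.+1 - i.+2)); last by lia.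
by rewrite !mulr0 subr0.
Qed.


Lemma R2 m : cc m.+2 = q ^+ m.+2 * a m.+1 - q ^+ m.+1 * a m.
Proof.
rewrite /a /cc big_nat_recl // [X in _ = _ * X - _]big_nat_recl //.
rewrite [X in _ = _ * (_ + X) - _](sum_ext _ (m := m.+2)) //; last first.
  move=> i /andP[h1 h2]; have -> : i = m.+1 by lia.
  by rewrite qb_gt ?mulr0 //; lia.
rewrite [X in _ = _ - _ * X](sum_ext _ (m := m.+2)) //; last first.
  move=> i /andP[h1 h2]; have -> : i = m.+1 by lia.
  by rewrite qb_gt ?mulr0 //; lia.
rewrite !subn0 !qb0 mulrDr -addrA !expr0 !mul1r bin0n add0n mulr1; congr (_ + _).
rewrite !mulr_sumr -sumrB; apply: eq_big_nat => i /andP[_ im].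
case: (leqP i m) => hi.
  have [d ->] : exists d, m = (i + d)%N by exists (m - i)%N; lia.
  have -> : ((i + d).+2 - i.+1 = d.+1)%N by lia.
  have -> : ((i + d).+1 - i.+1 = d)%N by lia.
  have -> : (i + d - i = d)%N by lia.
  rewrite qbSS binS bin1 !exprS !exprD !exprS; ring.
have -> : ((m.+2 - i.+1) = 0)%N by lia.
have -> : ((m.+1 - i.+1) = 0)%N by lia.
have -> : ((m - i) = 0)%N by lia.
case: i im hi => // i im hi.
by rewrite !qb0S !mulr0 subr0.
Qed.


Fixpoint E (m : nat) : rat :=
  match m with
  | 0 => 1
  | 1 => 1
  | 2 => 0
  | m'.+3 => - q ^+ m'.+1 * E m'
  end.

Lemma a4 m : a m.+4 = a m.+3 - q ^+ m.+2 * a m.+1 + q ^+ m.+1 * a m.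
Proof. rewrite R1 R2; ring. Qed.

Lemma a_E m : a m = E m.
Proof.
suff: [/\ a m = E m, a m.+1 = E m.+1, a m.+2 = E m.+2 & a m.+3 = E m.+3] by case.
elim: m => [|m [IH0 IH1 IH2 IH3]].
  rewrite /a /=; split.
  - by rewrite big_nat1.
  - by rewrite !big_nat_recl //= big_geq //=; ring.
  - by rewrite !big_nat_recl //= big_geq //=; ring.
  - rewrite !big_nat_recl //= big_geq //=.
    rewrite (_ : 'C(3, 2) = 3%N) //; ring.
split => //.
rewrite a4 IH3 IH1 IH0 /=; ring.
Qed.


Lemma ES m : E m.+3 = - q ^+ m.+1 * E m. Proof. by []. Qed.

Lemma E3 u : [/\ E (3 * u) = (-1) ^+ u * q ^+ (3 * 'C(u, 2) + u),
  E (3 * u).+1 = (-1) ^+ u * q ^+ (3 * 'C(u, 2) + 2 * u) & E (3 * u).+2 = 0].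
Proof.
elim: u => [|u [IH0 IH1 IH2]]; first by split; rewrite //= expr0 mul1r.
have e3 : (3 * u.+1 = (3 * u).+3)%N by lia.
rewrite e3 !ES IH0 IH1 IH2 binS bin1; split; last by rewrite mulr0.
  have -> : (3 * ('C(u, 2) + u) + u.+1 = (3 * u).+1 + (3 * 'C(u, 2) + u))%N by lia.
  rewrite !exprD !exprS; ring.
have -> : (3 * ('C(u, 2) + u) + 2 * u.+1 = (3 * u).+2 + (3 * 'C(u, 2) + 2 * u))%N by lia.
rewrite !exprD !exprS; ring.
Qed.

Definition S N := \sum_(0 <= k < N.+1) Dn N k * (q ^+ (k * (N - k)) * E (N - 2 * k)).

Lemma tri M (G : nat -> nat -> rat) :
  \sum_(0 <= r < M) \sum_(0 <= k < r.+1) G k (r - k)%N =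
  \sum_(0 <= k < M) \sum_(0 <= i < M - k) G k i.
Proof.
elim: M => [|M IH]; first by rewrite !big_geq.
rewrite big_nat_recr //= IH [RHS]big_nat_recr //= subSnn big_nat1.
rewrite (@eq_big_nat _ _ _ 0 M (fun k => \sum_(0 <= i < M.+1 - k) G k i)
   (fun k => \sum_(0 <= i < M - k) G k i + G k (M - k)%N)); last first.
  by move=> k /andP[_ kM]; rewrite subSn ?big_nat_recr //; lia.
rewrite big_split /= -addrA; congr (_ + _).
by rewrite big_nat_recr //= subnn.
Qed.

Lemma sum_g N : \sum_(0 <= r < N.+1) g N r = S N.
Proof.
rewrite /g (tri N.+1 (fun k i => Dn N k * T N k i)) /S.
apply: eq_big_nat => k /andP[_ kN].
rewrite -a_E /a !mulr_sumr.
rewrite [RHS](sum_ext _ (m := (N.+1 - k)%N)); last first.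
- move=> i /andP[h1 h2] /=; rewrite qb_gt ?mulr0 //; lia.
- lia.
apply: eq_big_nat => i /andP[_ iN].
rewrite /T subnDA (_ : N - k - k = N - 2 * k)%N; last by lia.
rewrite exprD; ring.
Qed.

End Alg.

Definition Dz (N : nat) (K : int) : int := binz N K - binz N (K - 1).
Definition Dnat (N k : nat) : int :=
  ('C(N, k))%:Z - (if k is k'.+1 then ('C(N, k'))%:Z else 0).

Lemma Dz_pos N k : Dz N (Posz k) = Dnat N k.
Proof.
case: k => [|k]; first by [].
rewrite /Dz /Dnat; have -> : (Posz k.+1 - 1 = Posz k) by lia.
by [].
Qed.

Lemma Dz_lt0 N K : K < 0 -> Dz N K = 0.
Proof. by case: K. Qed.

Lemma Dnat_refl N k : (k <= N)%N -> Dnat N (N - k).+1 = - Dnat N k.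
Proof.
move=> kN; rewrite /Dnat bin_sub //.
case: k kN => [|k] kN.
  by rewrite subn0 bin_small // subr0 sub0r.
have -> : (N - k.+1).+1 = (N - k)%N by lia.
rewrite -{1}(subKn (ltnW kN)) bin_sub ?leq_subr //.
have -> : (N - (N - k) = k)%N by lia.
by rewrite opprB.
Qed.

Lemma Dn_Dnat (q : rat) N k : (2 * k <= N)%N -> Dn N k = (Dnat N k)%:~R.
Proof.
move=> h; rewrite /Dn /Dnat h intrB; case: k h => [|k] h //.
Qed.

Lemma C2 m : ('C(m, 2) * 2 = m * m.-1)%N.
Proof.
elim: m => [|m IH] //; rewrite binS bin1 mulnDl IH.
case: m IH => [|m] IH //=; lia.
Qed.

Lemma group3 (f : nat -> rat) J :
  \sum_(0 <= t < 3 * J) f t = \sum_(0 <= j < J) (f (3 * j)%N + f (3 * j).+1 + f (3 * j).+2).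
Proof.
elim: J => [|J IH]; first by rewrite !big_geq.
have -> : (3 * J.+1 = (3 * J).+3)%N by lia.
by rewrite !big_nat_recr //= IH !addrA.
Qed.

Lemma m1even (u : nat) : (-1) ^+ (2 * u) = 1 :> rat.
Proof. by rewrite exprM (_ : (-1) ^+ 2 = 1 :> rat) ?expr1n //; rewrite expr2 mulrNN mulr1. Qed.

Section Final.
Variable Q : nat.
Local Notation q := (Q%:R : rat).

Definition Pz N (J : int) : rat :=
  let n := N./2 in
  if ~~ odd N then
    ((binz N (n%:Z - 3 * J) - binz N (n%:Z - 3 * J - 1))%:~R : rat)
      * q ^ ((n * n)%:Z - 3 * J * J - J)
  else
    ((binz N (n%:Z - 3 * J) - binz N (n%:Z - 3 * J - 1))%:~R : rat)
      * q ^ ((n * n + n)%:Z - 3 * J * J - 2 * J).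

Lemma Cpoly_Pz N : Cpoly N Q = \sum_(i < (2 * N).+1) Pz N (i%:Z - N%:Z).
Proof. by []. Qed.

Lemma Pz_big N : Pz N (Negz N) = 0.
Proof.
rewrite /Pz.
have -> : (N./2)%:Z - 3 * Negz N = Posz (N./2 + 3 * N + 3) by rewrite NegzE; lia.
have -> : Posz (N./2 + 3 * N + 3) - 1 = Posz (N./2 + 3 * N + 2) by lia.
by rewrite /= !bin_small ?subrr ?mul0r ?if_same //; lia.
Qed.

Lemma Cpoly_split N :
  Cpoly N Q = \sum_(0 <= j < N.+1) (Pz N (Posz j) + Pz N (Negz j)).
Proof.
rewrite Cpoly_Pz -(big_mkord xpredT (fun i => Pz N (i%:Z - N%:Z))).
rewrite (big_cat_nat _ (n := N)) //=; last by lia.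
rewrite (big_addn 0 _ N) (_ : ((2 * N).+1 - N = N.+1)%N); last by lia.
rewrite big_nat_rev /= big_split /= addrC; congr (_ + _).
  by apply: eq_big_nat => i _; congr (Pz N _); rewrite PoszD addrK.
rewrite (@eq_big_nat _ _ _ 0 N _ (fun j => Pz N (Negz j))); last first.
  move=> i /andP[_ iN]; congr (Pz N _).
  rewrite add0n -[Negz i]/(- (i.+1)%:Z); lia.
rewrite (@sum_ext (fun j => Pz N (Negz j)) N N.+1) //.
move=> i /andP[h1 h2]; have -> : i = N by lia.
exact: Pz_big.
Qed.

Definition fN N t : rat :=
  let n := N./2 in
  (Dz N (n%:Z - t%:Z))%:~R * (q ^+ ((n - t) * (N - (n - t))) * E q (N - 2 * (n - t))).

Lemma fN_gt N t : (N./2 < t)%N -> fN N t = 0.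
Proof. by move=> h; rewrite /fN Dz_lt0 ?mul0r //; lia. Qed.

Lemma fN_le N t : (t <= N./2)%N -> fN N t =
  (Dnat N (N./2 - t))%:~R * (q ^+ ((N./2 - t) * (N - (N./2 - t))) * E q (N - 2 * (N./2 - t))).
Proof. by move=> h; rewrite /fN subzn // Dz_pos. Qed.

Lemma S_f N : S q N = \sum_(0 <= t < 3 * N.+1) fN N t.
Proof.
have hN := odd_double_half N.
rewrite /S -[LHS](@sum_ext _ (N./2).+1 N.+1); first last.
- move=> k /andP[h1 _] /=; rewrite /Dn ifN ?mul0r //; lia.
- lia.
rewrite big_nat_rev /=.
rewrite -[RHS](@sum_ext (fN N) (N./2).+1); first last.
- by move=> t /andP[h1 _]; rewrite fN_gt.
- lia.
apply: eq_big_nat => t /andP[_ tn].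
rewrite add0n subSS fN_le; last by lia.
rewrite (Dn_Dnat q); last by lia.
by [].
Qed.


Lemma qpow (a b : nat) (e : int) : (a + b)%:Z = e -> q ^+ a * q ^+ b = q ^ e.
Proof. by move=> <-; rewrite -exprD exprnP. Qed.

Lemma Dnat_big N k : (N.+1 < k)%N -> Dnat N k = 0.
Proof. by case: k => [|k] // h; rewrite /Dnat !bin_small ?subrr //; lia. Qed.

Lemma even_match n j (N := n.*2) :
  fN N (3 * j) + fN N (3 * j).+1 + fN N (3 * j).+2 = Pz N (Posz j) + Pz N (Negz j).
Proof.
have hn : N./2 = n by rewrite /N doubleK.
have hN : N = (2 * n)%N by rewrite /N mul2n.
rewrite /Pz hn /N odd_double /= -/N.
rewrite -/(Dz N (n%:Z - 3 * j%:Z)) -/(Dz N (n%:Z - 3 * Negz j)).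
have e2 : fN N (3 * j).+1 = 0.
  case: (leqP (3 * j).+1 n) => h; last by rewrite fN_gt ?hn.
  rewrite fN_le hn //.
  have -> : (N - 2 * (n - (3 * j).+1) = (3 * (2 * j)).+2)%N by lia.
  by case: (E3 Q%:R (2 * j)) => _ _ ->; rewrite !mulr0.
rewrite e2 addr0 -addrA; congr (_ + _).
  case: (leqP (3 * j) n) => h; last first.
    by rewrite fN_gt ?hn // Dz_lt0 ?mul0r //; lia.
  rewrite fN_le hn //.
  have -> : n%:Z - 3 * j%:Z = Posz (n - 3 * j) by lia.
  rewrite Dz_pos.
  have -> : (N - 2 * (n - 3 * j) = 3 * (2 * j))%N by lia.
  case: (E3 Q%:R (2 * j)) => -> _ _; rewrite m1even mul1r.
  congr (_ * _); apply: qpow.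
  have := C2 (2 * j); nia.
have -> : n%:Z - 3 * Negz j = Posz (n + 3 * j + 3) by rewrite NegzE; lia.
rewrite Dz_pos.
case: (leqP (3 * j).+2 n) => h; last first.
  by rewrite fN_gt ?hn // Dnat_big ?mul0r //; lia.
rewrite fN_le hn //.
set d := (n - (3 * j).+2)%N.
have -> : (n + 3 * j + 3 = (N - d).+1)%N by rewrite /d; lia.
rewrite Dnat_refl; last by rewrite /d; lia.
have -> : (N - 2 * d = (3 * (2 * j).+1).+1)%N by rewrite /d; lia.
case: (E3 Q%:R (2 * j).+1) => _ -> _.
rewrite exprS m1even mulr1 intrN.
rewrite mulN1r !mulrN mulNr; congr (- (_ * _)).
apply: qpow; rewrite NegzE.
have := C2 (2 * j).+1; rewrite /d; nia.
Qed.


Lemma odd_match n j (N := (n.*2).+1) :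
  fN N (3 * j) + fN N (3 * j).+1 + fN N (3 * j).+2 = Pz N (Posz j) + Pz N (Negz j).
Proof.
have hn : N./2 = n by rewrite /N (half_bit_double n true).
rewrite /Pz hn /N /= odd_double /= -/N.
rewrite -/(Dz N (n%:Z - 3 * j%:Z)) -/(Dz N (n%:Z - 3 * Negz j)).
have e3 : fN N (3 * j).+2 = 0.
  case: (leqP (3 * j).+2 n) => h; last by rewrite fN_gt ?hn.
  rewrite fN_le hn //.
  have -> : (N - 2 * (n - (3 * j).+2) = (3 * (2 * j).+1).+2)%N by rewrite /N; lia.
  by case: (E3 Q%:R (2 * j).+1) => _ _ ->; rewrite !mulr0.
rewrite e3 addr0; congr (_ + _).
  case: (leqP (3 * j) n) => h; last first.
    by rewrite fN_gt ?hn // Dz_lt0 ?mul0r //; lia.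
  rewrite fN_le hn //.
  have -> : n%:Z - 3 * j%:Z = Posz (n - 3 * j) by lia.
  rewrite Dz_pos.
  have -> : (N - 2 * (n - 3 * j) = (3 * (2 * j)).+1)%N by rewrite /N; lia.
  case: (E3 Q%:R (2 * j)) => _ -> _; rewrite m1even mul1r.
  congr (_ * _); apply: qpow.
  have := C2 (2 * j); rewrite /N; nia.
have -> : n%:Z - 3 * Negz j = Posz (n + 3 * j + 3) by rewrite NegzE; lia.
rewrite Dz_pos.
case: (leqP (3 * j).+1 n) => h; last first.
  by rewrite fN_gt ?hn // Dnat_big ?mul0r //; rewrite /N; lia.
rewrite fN_le hn //.
set d := (n - (3 * j).+1)%N.
have -> : (n + 3 * j + 3 = (N - d).+1)%N by rewrite /d /N; lia.
rewrite Dnat_refl; last by rewrite /d /N; lia.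
have -> : (N - 2 * d = 3 * (2 * j).+1)%N by rewrite /d /N; lia.
case: (E3 Q%:R (2 * j).+1) => -> _ _.
rewrite exprS m1even mulr1 intrN.
rewrite mulN1r !mulrN mulNr; congr (- (_ * _)).
apply: qpow; rewrite NegzE.
have := C2 (2 * j).+1; rewrite /d /N; nia.
Qed.

Lemma S_Cpoly N : S q N = Cpoly N Q.
Proof.
rewrite S_f Cpoly_split group3; apply: eq_big_nat => j _.
have := odd_double_half N; case: (odd N) => /= <-.
  by rewrite add1n odd_match.
by rewrite add0n even_match.
Qed.

End Final.


Lemma cnt_g (F : finFieldType) N r :
  ((cnt F N r)%:R : rat) = g (#|F|%:R) N r.
Proof.
elim: N r => [|N IH] r.
  rewrite cnt0; case: r => [|r]; first by rewrite g_N0.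
  by rewrite g_gt //; lia.
move: (cnt_S F N r); rewrite add1n => ->.
case: r => [|r].
  by rewrite IH !g_N0 expr0 mul1r addr0.
rewrite !IH.
case: (leqP (2 * r.+1) N.+1) => h; first by rewrite g_rec.
rewrite (@g_gt _ N.+1 r.+1) // (@g_gt _ N r.+1); last by lia.
rewrite mulr0 add0r.
case: (ltnP N (2 * r)) => h2; first by rewrite g_gt ?mulr0.
have -> : (N - r = r)%N by lia.
by rewrite subrr mul0r.
Qed.

Unset Implicit Arguments.

Theorem mainTheorem1 (F : finFieldType) (n : nat) (hn : (0 < n)%N) :
  (#|[set X : 'M[F]_n | upper_triangular X && (X *m X == 0)]|%:R : rat)
  = Cpoly n #|F|.
Proof.
have -> : [set X : 'M[F]_n | upper_triangular X && (X *m X == 0)] = G F n by [].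
rewrite card_G_sum -S_Cpoly -sum_g big_mkord.
by apply: eq_bigr => r _; rewrite cnt_g.
Qed.
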